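(* Let $\alpha>0$, $0<p<1$ and $\beta_1,\beta_2,\beta_3>0$. Let $V_1,V_2,V_3$ be independent random variables with $V_i\sim EDW(\alpha,p,\beta_i)$, and set $X_1=\max\{V_1,V_3\}$, $X_2=\max\{V_2,V_3\}$. Then for $x_1,x_2\in\mathbb{N}_0$ the joint probability mass function $f_{X_1,X_2}(x_1,x_2)=P(X_1=x_1,X_2=x_2)$ is $$f_{X_1,X_2}(x_1,x_2)=\begin{cases} f_{EDW}(x_1;\alpha,p,\beta_1+\beta_3)\,f_{EDW}(x_2;\alpha,p,\beta_2) & \text{if } x_1<x_2,\\ f_{EDW}(x_1;\alpha,p,\beta_1)\,f_{EDW}(x_2;\alpha,p,\beta_2+\beta_3) & \text{if } x_2<x_1,\\ [1-p^{(x+1)^{\alpha}}]^{\beta_1}f_{EDW}(x;\alpha,p,\beta_2+\beta_3)-[1-p^{x^{\alpha}}]^{\beta_1+\beta_3}f_{EDW}(x;\alpha,p,\beta_2) & \text{if } x_1=x_2=x.\end{cases}$$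
   Context: The exponentiated discrete Weibull distribution $EDW(\alpha,p,\beta)$ ($\alpha,\beta>0$, $0<p<1$) is the distribution on $\mathbb{N}_0=\{0,1,2,\dots\}$ with cumulative distribution function $F_{EDW}(x;\alpha,p,\beta)=[1-p^{([x]+1)^{\alpha}}]^{\beta}$ for real $x\ge 0$, where $[x]$ is the largest integer $\le x$; its probability mass function is $f_{EDW}(x;\alpha,p,\beta)=[1-p^{(x+1)^{\alpha}}]^{\beta}-[1-p^{x^{\alpha}}]^{\beta}$, $x\in\mathbb{N}_0$ (with $p^{0}=1$). *)

(* Defs.v *)
From HB Require Import structures.
From mathcomp Require Import all_boot all_order all_algebra.
From mathcomp Require Import all_classical all_reals all_analysis.
Set Implicit Arguments. Unset Strict Implicit. Unset Printing Implicit Defensive.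
Import Order.TTheory GRing.Theory Num.Theory.
Local Open Scope ring_scope.
Local Open Scope classical_set_scope.

(* G(k) = [1 - p^{k^alpha}]^beta, so that the EDW cdf is F(x) = G([x]+1)
   (with the analysis convention 0 `^ alpha = 0 for alpha <> 0, so p^{0^alpha} = 1). *)
Definition edw_G (R : realType) (alpha p beta : R) (k : nat) : R :=
  (1 - p `^ (k%:R `^ alpha)) `^ beta.

Definition f_EDW (R : realType) (x : nat) (alpha p beta : R) : R :=
  edw_G alpha p beta x.+1 - edw_G alpha p beta x.

Definition indep3_nat d (T : measurableType d) (R : realType)
  (P : probability T R) (V1 V2 V3 : T -> nat) : Prop :=
  forall a b c : nat,
    P [set t | V1 t = a /\ V2 t = b /\ V3 t = c] =
    (P [set t | V1 t = a] * P [set t | V2 t = b] * P [set t | V3 t = c])%E.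

(* Main.v *)
Require Import Defs.
From HB Require Import structures.
From mathcomp Require Import all_boot all_order all_algebra.
From mathcomp Require Import all_classical all_reals all_analysis.
From mathcomp Require Import ring lra zify.
Import Order.TTheory GRing.Theory Num.Theory.
Local Open Scope ring_scope.
Local Open Scope classical_set_scope.

Lemma triple_sum (K : comPzRingType) (f1 f2 f3 : nat -> K) (s1 s2 s3 : seq nat) :
  \sum_(a <- s1) \sum_(b <- s2) \sum_(c <- s3) f1 a * f2 b * f3 c =
  (\sum_(a <- s1) f1 a) * (\sum_(b <- s2) f2 b) * (\sum_(c <- s3) f3 c).
Proof.
rewrite -mulrA big_distrl; apply: eq_bigr => a _.
rewrite big_distrl big_distrr; apply: eq_bigr => b _.
rewrite !big_distrr /=; apply: eq_bigr => c _; by rewrite !mulrA.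
Qed.

Section Aux.
Context (R : realType) (d : measure_display) (T : measurableType d) (P : probability T R).

Lemma mem_split (V : T -> nat) (Q : T -> Prop) (a : nat) (s : seq nat) :
  [set t | V t \in a :: s /\ Q t] =
  [set t | V t = a /\ Q t] `|` [set t | V t \in s /\ Q t].
Proof.
apply/seteqP; split => t /=.
  by rewrite in_cons => -[/orP[/eqP->|vs] q]; [left|right].
by case=> -[vs q]; split=> //; rewrite in_cons ?vs ?eqxx ?orbT.
Qed.

Lemma setin_nil (V : T -> nat) (Q : T -> Prop) :
  [set t | V t \in ([::] : seq nat) /\ Q t] = set0.
Proof. by apply/seteqP; split => t //= []. Qed.

Lemma meas_in (V : T -> nat) (Q : T -> Prop) (s : seq nat) :
  (forall k, measurable [set t | V t = k]) -> measurable [set t | Q t] ->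
  measurable [set t | V t \in s /\ Q t].
Proof.
move=> mV mQ; elim: s => [|a s IH]; first by rewrite setin_nil.
rewrite mem_split; apply: measurableU => //.
by rewrite (_ : [set t | _ /\ _] = [set t | V t = a] `&` [set t | Q t]) //; exact: measurableI.
Qed.

Lemma dec_in (V : T -> nat) (Q : T -> Prop) (s : seq nat) :
  (forall k, measurable [set t | V t = k]) -> measurable [set t | Q t] -> uniq s ->
  P [set t | V t \in s /\ Q t] = (\sum_(a <- s) P [set t | V t = a /\ Q t])%E.
Proof.
move=> mV mQ; elim: s => [|a s IH]; first by rewrite setin_nil measure0 big_nil.
move=> /= /andP[nas us]; rewrite big_cons -IH // mem_split measureU //.
- by rewrite (_ : [set t | _ /\ _] = [set t | V t = a] `&` [set t | Q t]) //; exact: measurableI.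
- exact: meas_in.
- apply/seteqP; split => t //= [[va _] [vs _]]; by move: nas; rewrite -va vs.
Qed.


Lemma box (V1 V2 V3 : T -> nat) (f1 f2 f3 : nat -> R) :
  (forall k : nat, measurable [set t | V1 t = k]) ->
  (forall k : nat, measurable [set t | V2 t = k]) ->
  (forall k : nat, measurable [set t | V3 t = k]) ->
  indep3_nat P V1 V2 V3 ->
  (forall x : nat, P [set t | V1 t = x] = (f1 x)%:E) ->
  (forall x : nat, P [set t | V2 t = x] = (f2 x)%:E) ->
  (forall x : nat, P [set t | V3 t = x] = (f3 x)%:E) ->
  forall s1 s2 s3 : seq nat, uniq s1 -> uniq s2 -> uniq s3 ->
  P [set t | V1 t \in s1 /\ V2 t \in s2 /\ V3 t \in s3] =
  ((\sum_(a <- s1) f1 a) * (\sum_(b <- s2) f2 b) * (\sum_(c <- s3) f3 c))%:E.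
Proof.
move=> m1 m2 m3 ind h1 h2 h3 s1 s2 s3 u1 u2 u3.
have mT : measurable [set t : T | True] by rewrite (_ : [set t | True] = setT).
have m3' : measurable [set t | V3 t \in s3 /\ True].
  exact: meas_in.
have e3 : [set t | V3 t \in s3] = [set t | V3 t \in s3 /\ True].
  by apply/seteqP; split => t /=; tauto.
have m3s : measurable [set t | V3 t \in s3] by rewrite e3.
have m23 : measurable [set t | V2 t \in s2 /\ V3 t \in s3].
  by apply: meas_in => //; rewrite e3.
have mI : forall A B : set T, measurable A -> measurable B -> measurable [set t | A t /\ B t].
  by move=> A B mA mB; exact: measurableI.
have inner3 : forall a b, P [set t | V3 t \in s3 /\ (V1 t = a /\ V2 t = b)] =
    (\sum_(c <- s3) f1 a * f2 b * f3 c)%:E.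
  move=> a b; rewrite dec_in //; last exact: (mI _ _ (m1 a) (m2 b)).
  rewrite -sumEFin; apply: eq_bigr => c _.
  rewrite (_ : [set t | _ /\ _] = [set t | V1 t = a /\ V2 t = b /\ V3 t = c]); last first.
    by apply/seteqP; split => t /=; tauto.
  by rewrite ind h1 h2 h3 !EFinM.
have inner2 : forall a, P [set t | V2 t \in s2 /\ (V1 t = a /\ V3 t \in s3)] =
    (\sum_(b <- s2) \sum_(c <- s3) f1 a * f2 b * f3 c)%:E.
  move=> a; rewrite dec_in //; last exact: (mI _ _ (m1 a) m3s).
  rewrite -sumEFin; apply: eq_bigr => b _.
  rewrite -inner3; congr (P _).
  by apply/seteqP; split => t /=; tauto.
rewrite dec_in //.
rewrite (eq_bigr (fun a => (\sum_(b <- s2) \sum_(c <- s3) f1 a * f2 b * f3 c)%:E)); last first.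
  move=> a _; rewrite -inner2; congr (P _).
  by apply/seteqP; split => t /=; tauto.
rewrite sumEFin; congr EFin; exact: triple_sum.
Qed.


Lemma meas_box (V1 V2 V3 : T -> nat) (s1 s2 s3 : seq nat) :
  (forall k : nat, measurable [set t | V1 t = k]) ->
  (forall k : nat, measurable [set t | V2 t = k]) ->
  (forall k : nat, measurable [set t | V3 t = k]) ->
  measurable [set t | V1 t \in s1 /\ V2 t \in s2 /\ V3 t \in s3].
Proof.
move=> m1 m2 m3.
have mT : measurable [set t : T | True] by rewrite (_ : [set t | True] = setT).
have e3 : [set t | V3 t \in s3] = [set t | V3 t \in s3 /\ True].
  by apply/seteqP; split => t /=; tauto.
have m3s : measurable [set t | V3 t \in s3] by rewrite e3; exact: meas_in.
by apply: meas_in => //; apply: meas_in.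
Qed.

Lemma two_box (V1 V2 V3 : T -> nat) (f1 f2 f3 : nat -> R)
  (Q : nat -> nat -> nat -> Prop) (s1 s2 s3 u1 u2 u3 : seq nat) :
  (forall k : nat, measurable [set t | V1 t = k]) ->
  (forall k : nat, measurable [set t | V2 t = k]) ->
  (forall k : nat, measurable [set t | V3 t = k]) ->
  indep3_nat P V1 V2 V3 ->
  (forall x : nat, P [set t | V1 t = x] = (f1 x)%:E) ->
  (forall x : nat, P [set t | V2 t = x] = (f2 x)%:E) ->
  (forall x : nat, P [set t | V3 t = x] = (f3 x)%:E) ->
  uniq s1 -> uniq s2 -> uniq s3 -> uniq u1 -> uniq u2 -> uniq u3 ->
  (forall a b c, Q a b c <-> (a \in s1 /\ b \in s2 /\ c \in s3) \/ (a \in u1 /\ b \in u2 /\ c \in u3)) ->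
  (forall c, c \in s3 -> c \in u3 -> False) ->
  P [set t | Q (V1 t) (V2 t) (V3 t)] =
  ((\sum_(a <- s1) f1 a) * (\sum_(b <- s2) f2 b) * (\sum_(c <- s3) f3 c) +
   (\sum_(a <- u1) f1 a) * (\sum_(b <- u2) f2 b) * (\sum_(c <- u3) f3 c))%:E.
Proof.
move=> m1 m2 m3 ind h1 h2 h3 us1 us2 us3 uu1 uu2 uu3 hQ hd.
rewrite (_ : [set t | _] = [set t | V1 t \in s1 /\ V2 t \in s2 /\ V3 t \in s3] `|`
  [set t | V1 t \in u1 /\ V2 t \in u2 /\ V3 t \in u3]); last first.
  by apply/seteqP; split => t /=; rewrite hQ.
have b1 := box V1 V2 V3 f1 f2 f3 m1 m2 m3 ind h1 h2 h3 s1 s2 s3 us1 us2 us3.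
have b2 := box V1 V2 V3 f1 f2 f3 m1 m2 m3 ind h1 h2 h3 u1 u2 u3 uu1 uu2 uu3.
rewrite measureU; first by rewrite EFinD -b1 -b2.
- exact: meas_box.
- exact: meas_box.
apply/seteqP; split => t //= [[_ [_ c1]] [_ [_ c2]]]; exact: hd c1 c2.
Qed.
End Aux.

Lemma sum_edw (R : realType) (alpha p b : R) (n : nat) : alpha != 0 -> b != 0 ->
  \sum_(a <- iota 0 n) f_EDW a alpha p b = edw_G alpha p b n.
Proof.
move=> ha hb; have -> : iota 0 n = index_iota 0 n by rewrite /index_iota subn0.
rewrite telescope_sumr // [edw_G _ _ _ 0]/edw_G mulr0n powR0 // powRr0 subrr powR0 //.
by rewrite subr0.
Qed.

Lemma edwD (R : realType) (alpha p b1 b3 : R) (k : nat) : 0 < b1 -> 0 < b3 ->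
  edw_G alpha p (b1 + b3) k = edw_G alpha p b1 k * edw_G alpha p b3 k.
Proof.
move=> h1 h3; rewrite /edw_G powRD //.
by have -> : (b1 + b3 == 0) = false by apply/negbTE; rewrite gt_eqF // addr_gt0.
Qed.

Theorem mainTheorem2 (R : realType) (d : measure_display) (T : measurableType d)
  (P : probability T R) (V1 V2 V3 : T -> nat) (alpha p b1 b2 b3 : R) :
  0 < alpha -> 0 < p -> p < 1 -> 0 < b1 -> 0 < b2 -> 0 < b3 ->
  (forall k : nat, measurable [set t | V1 t = k]) ->
  (forall k : nat, measurable [set t | V2 t = k]) ->
  (forall k : nat, measurable [set t | V3 t = k]) ->
  indep3_nat P V1 V2 V3 ->
  (forall x : nat, P [set t | V1 t = x] = (f_EDW x alpha p b1)%:E) ->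
  (forall x : nat, P [set t | V2 t = x] = (f_EDW x alpha p b2)%:E) ->
  (forall x : nat, P [set t | V3 t = x] = (f_EDW x alpha p b3)%:E) ->
  forall x1 x2 : nat,
    P [set t | maxn (V1 t) (V3 t) = x1 /\ maxn (V2 t) (V3 t) = x2] =
    (if (x1 < x2)%N then f_EDW x1 alpha p (b1 + b3) * f_EDW x2 alpha p b2
     else if (x2 < x1)%N then f_EDW x1 alpha p b1 * f_EDW x2 alpha p (b2 + b3)
     else (1 - p `^ ((x1.+1)%:R `^ alpha)) `^ b1 * f_EDW x1 alpha p (b2 + b3)
          - (1 - p `^ ((x1%:R) `^ alpha)) `^ (b1 + b3) * f_EDW x1 alpha p b2)%:E.
Proof.
move=> ha hp hp1 hb1 hb2 hb3 m1 m2 m3 ind h1 h2 h3 x1 x2.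
have an : alpha != 0 by rewrite gt_eqF.
have bn1 : b1 != 0 by rewrite gt_eqF.
have bn2 : b2 != 0 by rewrite gt_eqF.
have bn3 : b3 != 0 by rewrite gt_eqF.
have E : forall b k, (1 - p `^ (k%:R `^ alpha)) `^ b = edw_G alpha p b k by [].
have TB := @two_box R d T P V1 V2 V3 _ _ _
  (fun a b c => maxn a c = x1 /\ maxn b c = x2) _ _ _ _ _ _ m1 m2 m3 ind h1 h2 h3.
have dj : forall y c : nat, c \in [:: y] -> c \in iota 0 y -> False.
  move=> y c; rewrite mem_seq1 => /eqP ->; rewrite mem_iota; lia.
case: ltngtP => h.
- rewrite (TB (iota 0 x1.+1) [:: x2] [:: x1] [:: x1] [:: x2] (iota 0 x1)) ?iota_uniq //; last (by exact: dj); last first.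
    by move=> a b c; rewrite !mem_iota !mem_seq1; lia.
  rewrite !big_seq1 !sum_edw //; congr EFin.
  rewrite /f_EDW !edwD //; set g := edw_G alpha p; clearbody g; ring.
- rewrite (TB [:: x1] (iota 0 x2.+1) [:: x2] [:: x1] [:: x2] (iota 0 x2)) ?iota_uniq //; last (by exact: dj); last first.
    by move=> a b c; rewrite !mem_iota !mem_seq1; lia.
  rewrite !big_seq1 !sum_edw //; congr EFin.
  rewrite /f_EDW !edwD //; set g := edw_G alpha p; clearbody g; ring.
- subst x2.
  rewrite (TB (iota 0 x1.+1) (iota 0 x1.+1) [:: x1] [:: x1] [:: x1] (iota 0 x1)) ?iota_uniq //; last (by exact: dj); last first.
    by move=> a b c; rewrite !mem_iota !mem_seq1; lia.
  rewrite !big_seq1 !sum_edw // !E; congr EFin.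
  rewrite /f_EDW !edwD //; set g := edw_G alpha p; clearbody g; ring.
Qed.
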